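(* Let $G\in\mathscr M_+([0,\infty))$ have no atoms in $(0,\infty)$ (i.e. $G(\{x\})=0$ for all $x>0$) and satisfy $\int_{(0,\infty)}\frac{G(x)}{\sqrt x}dx<\infty$. Then for every admissible family $(\varphi_\varepsilon)$, $$\lim_{\varepsilon\to0}\mathscr Q_3^{(2)}(\varphi_\varepsilon,G)=0.$$
   Context: $\mathscr M_+([0,\infty))$ is the set of nonnegative finite Radon measures on $[0,\infty)$; we write $\int_A\varphi(x)G(x)dx$ for $\int_A\varphi\,dG$. $C^1_b([0,\infty))$ denotes bounded $C^1$ functions with bounded derivative. For continuous $\varphi$: $\Lambda(\varphi)(x,y)=\varphi(x+y)+\varphi(|x-y|)-2\varphi(\max\{x,y\})$ and $\mathscr Q_3^{(2)}(\varphi,G)=\iint_{(0,\infty)^2}\frac{\Lambda(\varphi)(x,y)}{\sqrt{xy}}G(x)G(y)dxdy$. Admissible family: $(\varphi_\varepsilon)_{\varepsilon>0}$ with $\varphi_\varepsilon(x)=\varphi(x/\varepsilon)$, where $\varphi\in C^1_b([0,\infty))$ is nonnegative and convex with $\varphi(0)=1$ and $\lim_{x\to\infty}\sqrt x\,\varphi(x)=0$. *)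

(* Defs.v *)
From HB Require Import structures.
From mathcomp Require Import all_boot all_order all_algebra.
From mathcomp Require Import all_classical all_reals all_analysis.
Set Implicit Arguments. Unset Strict Implicit. Unset Printing Implicit Defensive.
Import Order.TTheory GRing.Theory Num.Theory.
Import numFieldNormedType.Exports.
Local Open Scope classical_set_scope.
Local Open Scope ring_scope.

Definition Lambda (R : realType) (phi : R -> R) (x y : R) : R :=
  phi (x + y) + phi `|x - y| - 2 * phi (Num.max x y).

Definition Q32 (R : realType) (G : {finite_measure set R -> \bar R}) (phi : R -> R) : R :=
  fine (\int[(G \x G)%E]_(p in (`]0%R, +oo[%classic : set R) `*` (`]0%R, +oo[%classic : set R))
          ((Lambda phi p.1 p.2 / Num.sqrt (p.1 * p.2))%:E))%E.

(* phi in C^1_b([0,oo)): bounded on [0,oo), continuous on [0,oo), differentiable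
   on (0,oo) with a derivative that extends to a bounded continuous function on
   [0,oo) (so the one-sided derivative at 0 exists and equals dphi 0). *)
Definition C1b_half (R : realType) (phi : R -> R) : Prop :=
  (exists M : R, forall x, 0 <= x -> `|phi x| <= M) /\
  {within `[0%R, +oo[%classic, continuous phi} /\
  (forall x : R, 0 < x -> derivable phi x 1) /\
  exists dphi : R -> R,
    {within `[0%R, +oo[%classic, continuous dphi} /\
    (exists M : R, forall x, 0 <= x -> `|dphi x| <= M) /\
    (forall x : R, 0 < x -> derive1 phi x = dphi x) /\
    (fun h : R => h^-1 * (phi h - phi 0)) @ 0^'+ --> dphi 0.

Definition convex_half (R : realType) (phi : R -> R) : Prop :=
  forall x y t : R, 0 <= x -> 0 <= y -> 0 <= t <= 1 ->
    phi (t * x + (1 - t) * y) <= t * phi x + (1 - t) * phi y.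

(* profile of an admissible family phi_eps(x) = phi(x/eps) *)
Definition admissible_profile (R : realType) (phi : R -> R) : Prop :=
  C1b_half phi /\ (forall x, 0 <= x -> 0 <= phi x) /\ convex_half phi /\
  phi 0 = 1 /\ (fun x => Num.sqrt x * phi x) @ +oo --> (0 : R).

Definition rescale (R : realType) (phi : R -> R) (eps : R) : R -> R :=
  fun x => phi (x / eps).

(* Main.v *)
Require Import Defs.
From HB Require Import structures.
From mathcomp Require Import all_boot all_order all_algebra.
From mathcomp Require Import all_classical all_reals all_analysis.
From mathcomp Require Import measurable_realfun.
From mathcomp Require Import ring lra.
Import Order.TTheory GRing.Theory Num.Theory.
Import numFieldNormedType.Exports.
Local Open Scope classical_set_scope.
Local Open Scope ring_scope.
Section S.
Variable R : realType.

Lemma phi_inf0 (phi : R -> R) :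
  (fun x => Num.sqrt x * phi x) @ +oo --> (0:R) -> phi @ +oo --> (0:R).
Proof.
move=> h; apply/cvgrPdist_lt => e e0.
have := (cvgrPdist_lt _ _).1 h e e0.
move=> H; near=> t.
have t1 : 1 <= t by near: t; exact: nbhs_pinfty_ge.
have Ht : `|0 - Num.sqrt t * phi t| < e by near: t; exact: H.
apply: le_lt_trans Ht; rewrite !sub0r !normrN normrM.
rewrite -[leLHS]mul1r ler_wpM2r //.
by rewrite ger0_norm ?sqrtr_ge0 // -sqrtr1 ler_sqrt // ler01.
Unshelve. all: by end_near. Qed.

Lemma phi_seq0 (phi : R -> R) (u : R^nat) (a : R) :
  phi @ +oo --> (0:R) -> (forall n, 0 < u n) -> u n @[n --> \oo] --> 0 -> 0 < a ->
  phi (a / u n) @[n --> \oo] --> 0.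
Proof.
move=> hphi u0 uc a0.
have h1 : (fun n => u n / a) @ \oo --> (0:R).
  rewrite -(mul0r a^-1); apply: cvgMl; exact: uc.
have h : (fun n => a / u n) @ \oo --> +oo.
  have -> : (fun n => a / u n) = (fun n => (u n / a)^-1).
    by apply/funext => n /=; rewrite invf_div.
  apply/(cvgrVy _).2 => //.
  by near=> n; rewrite divr_gt0.
exact: (cvg_comp _ _ h hphi).
Unshelve. all: by end_near. Qed.

Lemma lambda_cvg (phi : R -> R) (u : R^nat) (x y : R) :
  phi @ +oo --> (0:R) -> (forall n, 0 < u n) -> u n @[n --> \oo] --> 0 ->
  0 < x -> 0 < y -> x != y ->
  (Lambda (rescale phi (u n)) x y / Num.sqrt (x * y)) @[n --> \oo] --> 0.
Proof.
move=> hphi u0 uc x0 y0 xy.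
have h1 := phi_seq0 _ _ _ hphi u0 uc (addr_gt0 x0 y0).
have h2 : phi (`|x - y| / u n) @[n --> \oo] --> 0.
  apply: phi_seq0 hphi u0 uc _; by rewrite normr_gt0 subr_eq0.
have h3 : phi (Num.max x y / u n) @[n --> \oo] --> 0.
  apply: phi_seq0 hphi u0 uc _; by rewrite lt_max x0.
have H := @cvgMr_tmp _ _ _ _ _ _ ((Num.sqrt (x * y))^-1) (cvgB (cvgD h1 h2) (@cvgMl_tmp _ _ _ _ _ 2 _ h3)).
rewrite mulr0 subr0 addr0 mul0r in H.
exact: H.
Qed.

Local Notation D := ((`]0%R, +oo[%classic : set R) `*` (`]0%R, +oo[%classic : set R)).

Lemma Dpos (p : R * R) : D p -> 0 < p.1 /\ 0 < p.2.
Proof. by case=> /=; rewrite !in_itv /= !andbT. Qed.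

Lemma mD : measurable D.
Proof. by apply: measurableX; exact: measurable_itv. Qed.

Lemma mcomp_phi (phi : R -> R) (g : R * R -> R) :
  {within `[0%R, +oo[%classic, continuous phi} ->
  measurable_fun D g -> (forall p, D p -> 0 <= g p) ->
  measurable_fun D (fun p => phi (g p)).
Proof.
move=> cphi mg g0.
have mphi : measurable_fun (`[0%R, +oo[%classic : set R) phi.
  apply: subspace_continuous_measurable_fun => //; exact: measurable_itv.
apply: (measurable_comp (measurable_itv _) _ mphi mg).
by move=> _ [p Dp <-]; rewrite /= in_itv /= andbT g0.
Qed.

Lemma minvsqrt : measurable_fun D (fun p : R * R => (Num.sqrt (p.1 * p.2))^-1).
Proof.
have mh : measurable_fun (`]0%R, +oo[%classic : set R) (fun t : R => (Num.sqrt t)^-1).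
  apply: open_continuous_measurable_fun; first exact: interval_open.
  move=> t; rewrite inE /= in_itv /= andbT => t0.
  apply: continuous_comp; first exact: sqrt_continuous.
  by apply: inv_continuous; rewrite gt_eqF // sqrtr_gt0.
apply: (measurable_comp (measurable_itv _) _ mh).
  by move=> _ [p /Dpos [p1 p2] <-]; rewrite /= in_itv /= andbT mulr_gt0.
apply: measurable_funM; apply: measurable_funS (measurableT) _ _ => //.
Qed.

Lemma mfst : measurable_fun D (fun p : R * R => p.1).
Proof. exact: (measurable_funS measurableT (@subsetT _ D) measurable_fst). Qed.
Lemma msnd : measurable_fun D (fun p : R * R => p.2).
Proof. exact: (measurable_funS measurableT (@subsetT _ D) measurable_snd). Qed.

Lemma mintegrand (phi : R -> R) (e : R) :
  {within `[0%R, +oo[%classic, continuous phi} -> 0 < e ->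
  measurable_fun D (fun p : R * R =>
     (Lambda (rescale phi e) p.1 p.2 / Num.sqrt (p.1 * p.2))%:E).
Proof.
move=> cphi e0; apply/measurable_EFinP.
apply: measurable_funM; last exact: minvsqrt.
rewrite /Lambda /rescale.
have mdiv (g : R * R -> R) : measurable_fun D g -> measurable_fun D (fun p => g p / e).
  by move=> mg; apply: measurable_funM => //; exact: measurable_cst.
apply: measurable_funB; first apply: measurable_funD.
- apply: mcomp_phi => //; first by apply: mdiv; apply: measurable_funD; [exact: mfst|exact: msnd].
  by move=> p /Dpos [p1 p2]; apply: divr_ge0; apply: ltW => //; exact: addr_gt0.
- have mab : measurable_fun D (fun p : R * R => `|p.1 - p.2|).
    apply: (@measurableT_comp _ _ _ _ _ _ (@Num.norm _ R)); first exact: normr_measurable.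
    by apply: measurable_funB; [exact: mfst|exact: msnd].
  apply: mcomp_phi => //; first exact: mdiv.
  by move=> p _; apply: divr_ge0 => //; exact: ltW.
- apply: measurable_funM; first exact: measurable_cst.
  apply: mcomp_phi => //; first by apply: mdiv; apply: measurable_maxr; [exact: mfst|exact: msnd].
  move=> p /Dpos [p1 p2]; apply: divr_ge0; last exact: ltW.
  by apply: ltW; rewrite lt_max p1.
Qed.

Lemma lambda_bound (phi : R -> R) (M e x y : R) :
  (forall t, 0 <= t -> `|phi t| <= M) -> 0 < e -> 0 < x -> 0 < y ->
  `|Lambda (rescale phi e) x y / Num.sqrt (x * y)| <= 4 * M * (Num.sqrt (x * y))^-1.
Proof.
move=> hM e0 x0 y0.
rewrite normrM normfV (ger0_norm (sqrtr_ge0 _)).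
apply: ler_wpM2r; first by rewrite invr_ge0 sqrtr_ge0.
rewrite /Lambda /rescale.
have h1 : `|phi ((x + y) / e)| <= M.
  by apply: hM; apply: divr_ge0; apply: ltW => //; exact: addr_gt0.
have h2 : `|phi (`|x - y| / e)| <= M.
  by apply: hM; apply: divr_ge0 => //; exact: ltW.
have h3 : `|phi (Num.max x y / e)| <= M.
  by apply: hM; apply: divr_ge0; last exact: ltW; apply: ltW; rewrite lt_max x0.
apply: (le_trans (ler_normB _ _)).
apply: (le_trans (lerD (ler_normD _ _) (lexx _))).
rewrite normrM (ger0_norm (ler0n _ 2)).
have -> : 4 * M = M + M + 2 * M.
  by ring.
by rewrite lerD ?lerD // ler_wpM2l.
Qed.
Local Notation I := (`]0%R, +oo[%classic : set R).
Lemma mhI : measurable_fun I (fun t : R => (Num.sqrt t)^-1).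
Proof.
apply: open_continuous_measurable_fun; first exact: interval_open.
move=> t; rewrite inE /= in_itv /= andbT => t0.
apply: continuous_comp; first exact: sqrt_continuous.
by apply: inv_continuous; rewrite gt_eqF // sqrtr_gt0.
Qed.

Variable G : {finite_measure set R -> \bar R}.

Lemma integrable_dom (M : R) : 0 <= M ->
  (\int[G]_(x in I) ((Num.sqrt x)^-1)%:E < +oo)%E ->
  (G \x G)%E.-integrable D (fun p : R * R => (4 * M * (Num.sqrt (p.1 * p.2))^-1)%:E).
Proof.
move=> M0 Gint.
set J := (\int[G]_(x in I) ((Num.sqrt x)^-1)%:E)%E.
have J0 : (0 <= J)%E.
  by apply: integral_ge0 => x _; rewrite lee_fin invr_ge0 sqrtr_ge0.
have mg : measurable_fun D (fun p : R * R => (4 * M * (Num.sqrt (p.1 * p.2))^-1)%:E).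
  apply/measurable_EFinP; apply: measurable_funM; [exact: measurable_cst|exact: minvsqrt].
apply/integrableP; split => //.
rewrite (eq_integral (fun p : R * R => (4 * M * (Num.sqrt (p.1 * p.2))^-1)%:E)); last first.
  by move=> p _; rewrite gee0_abs // lee_fin mulr_ge0 ?mulr_ge0 ?invr_ge0 ?sqrtr_ge0.
rewrite integral_mkcond.
rewrite (fubini_tonelli1 (fun p : R * R => ((fun p : R * R => (4 * M * (Num.sqrt (p.1 * p.2))^-1)%:E) \_ D) p)); last 2 first.
- by apply/(measurable_restrictT _ _).1; [exact: mD|exact: mg].
- move=> p; rewrite /patch; case: ifP => // _.
  by rewrite lee_fin mulr_ge0 ?mulr_ge0 ?invr_ge0 ?sqrtr_ge0.
set k := fun x : R => (4 * M * (Num.sqrt x)^-1)%:E.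
set h := fun y : R => ((Num.sqrt y)^-1)%:E.
have mk : measurable_fun setT (k \_ I).
  apply/(measurable_restrictT _ _).1; first exact: measurable_itv.
  by apply/measurable_EFinP; apply: measurable_funM; [exact: measurable_cst|exact: mhI].
have mh : measurable_fun setT (h \_ I).
  apply/(measurable_restrictT _ _).1; first exact: measurable_itv.
  by apply/measurable_EFinP; exact: mhI.
have k0 x : (0 <= (k \_ I) x)%E.
  by rewrite /patch; case: ifP => // _; rewrite lee_fin mulr_ge0 ?mulr_ge0 ?invr_ge0 ?sqrtr_ge0.
have h0 x : (0 <= (h \_ I) x)%E.
  by rewrite /patch; case: ifP => // _; rewrite lee_fin invr_ge0 sqrtr_ge0.
have inner x : fubini_F G ((fun p : R * R => (4 * M * (Num.sqrt (p.1 * p.2))^-1)%:E) \_ D) x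
    = ((k \_ I) x * J)%E.
  rewrite /fubini_F.
  have [xI|xI] := boolP (x \in I).
    rewrite (eq_integral (fun y => (k x * (h \_ I) y)%E)); last first.
      move=> y _; rewrite /patch; have [yI|yI] := boolP (y \in I).
        rewrite ifT; last by rewrite inE; split; apply/set_mem.
        rewrite /k /h -EFinM; congr (_%:E).
        have x0 : 0 <= x by move/set_mem: xI; rewrite /= in_itv /= andbT => /ltW.
        by rewrite sqrtrM // invfM mulrA.
      rewrite ifF ?mule0 //; apply/negP; rewrite inE => -[_ /mem_set]; exact/negP.
    rewrite ge0_integralZl //; last by rewrite lee_fin mulr_ge0 ?mulr_ge0 ?invr_ge0 ?sqrtr_ge0.
    by rewrite /patch xI -integral_mkcond.
  rewrite /patch ifF; last by apply/negP; rewrite inE => -[/mem_set]; exact/negP.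
  rewrite mul0e (eq_integral (cst 0%E)); last first.
    move=> y _; rewrite ifF //; apply/negP; rewrite inE => -[xI1 _].
    by move/negP: xI; apply; exact: mem_set.
  exact: integral0.
rewrite (eq_integral (fun x => ((k \_ I) x * J)%E)); last by move=> x _; exact: inner.
rewrite ge0_integralZr //.
rewrite -integral_mkcond.
rewrite (eq_integral (fun x => ((4 * M)%:E * h x)%E)); last by move=> x _; rewrite /k /h EFinM.
rewrite ge0_integralZl //; last 3 first.
- by apply/measurable_EFinP; exact: mhI.
- by move=> x _; rewrite lee_fin invr_ge0 sqrtr_ge0.
- by rewrite lee_fin mulr_ge0.
have Jfin : J \is a fin_num by rewrite ge0_fin_numE.
rewrite -/J -(fineK Jfin) -!EFinM; exact: ltry.
Qed.

Local Notation N := (D `&` ((fun p : R * R => p.1 == p.2) @^-1` [set true])).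

Lemma mN : measurable N.
Proof. exact: (measurable_fun_eqr mfst msnd mD). Qed.

Lemma diag_null : (forall x : R, 0 < x -> G [set x] = 0%E) -> (G \x G)%E N = 0%E.
Proof.
move=> Gatom.
rewrite /product_measure1 /=.
apply: integral0_eq => x _ /=.
have [x0|x0] := ltP 0 x.
  apply/eqP; rewrite eq_le measure_ge0 andbT -(Gatom _ x0).
  apply: le_measure; rewrite ?inE; [exact: measurable_xsection mN| exact: measurable_set1|].
  by move=> y; rewrite /xsection /= inE => -[_ /eqP /= ->].
rewrite (_ : xsection _ _ = set0) ?measure0 //.
apply/seteqP; split => // y; rewrite /xsection /= inE => -[[/= + _] _].
by rewrite in_itv /= andbT => /(le_lt_trans x0); rewrite ltxx.
Qed.

Lemma main_aux (phi : R -> R) :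
  (forall x : R, 0 < x -> G [set x] = 0%E) ->
  (\int[G]_(x in I) ((Num.sqrt x)^-1)%:E < +oo)%E ->
  admissible_profile phi ->
  (fun eps : R => Q32 G (rescale phi eps)) @ 0^'+ --> (0 : R).
Proof.
move=> Gatom Gint [[[M HM] [cphi _]] [_ [_ [_ hinf]]]].
have phi0 := phi_inf0 _ hinf.
have M0 : 0 <= M by apply: le_trans (normr_ge0 (phi 0)) (HM 0 (lexx 0)).
apply/cvg_at_rightP => u [u0 uc].
pose f_ n := fun p : R * R => (Lambda (rescale phi (u n)) p.1 p.2 / Num.sqrt (p.1 * p.2))%:E.
pose g := fun p : R * R => (4 * M * (Num.sqrt (p.1 * p.2))^-1)%:E.
have mf n : measurable_fun D (f_ n) by exact: mintegrand cphi (u0 n).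
have ae1 : {ae (G \x G)%E, forall p, D p -> f_ ^~ p @ \oo --> (cst 0%E p)}.
  exists N; split; [exact: mN | exact: diag_null Gatom |].
  move=> p /= np; split.
    by apply: contrapT => nD; apply: np => Dp; exfalso.
  apply: contrapT => neq; apply: np => Dp; have [p1 p2] := Dpos _ Dp.
  apply: cvg_EFin; first by near=> n.
  apply: (lambda_cvg _ _ _ _ phi0 u0 uc p1 p2).
  by apply/negP => h; apply: neq; exact: h.
have ae2 : {ae (G \x G)%E, forall p n, D p -> (`|f_ n p| <= g p)%E}.
  apply: aeW => p n Dp; have [p1 p2] := Dpos _ Dp.
  by rewrite /= lee_fin; exact: lambda_bound.
have [_ _ H] := dominated_convergence mD mf (measurable_cst _) ae1 (integrable_dom M M0 Gint) ae2.
move: H; rewrite integral0 => H.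
exact: (fine_cvg H).
Unshelve. all: by end_near. Qed.
End S.
Theorem mainTheorem17 (R : realType) (G : {finite_measure set R -> \bar R})
  (phi : R -> R) :
  G (`]-oo, 0%R[%classic : set R) = 0%E ->
  (forall x : R, 0 < x -> G [set x] = 0%E) ->
  (\int[G]_(x in (`]0%R, +oo[%classic : set R)) ((Num.sqrt x)^-1)%:E < +oo)%E ->
  admissible_profile phi ->
  (fun eps : R => Q32 G (rescale phi eps)) @ 0^'+ --> (0 : R).
Proof.
move=> _.
exact (@main_aux R G phi).
Qed.
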